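(* Let $\Gamma$ be a finite simplicial graph with no SIL, and let $k\ge0$ be the number of non-abelian free equivalence classes of $\Gamma$. Then $\mathbb{A}_\Gamma\cong(\mathbb{F}_2)^k\times\mathbb{A}_\Lambda$ for some graph $\Lambda$ with no non-abelian free equivalence class.
   Context: $\mathbb{A}_\Gamma$ is the right-angled Artin group on $\Gamma$. $\mathrm{lk}(u)$ = neighbours of $u$, $\mathrm{st}(u)=\mathrm{lk}(u)\cup\{u\}$; $u\le v$ iff $\mathrm{lk}(u)\subseteq\mathrm{st}(v)$; $u\sim v$ iff $u\le v\le u$; a non-abelian free equivalence class is a class of size $\ge 2$ whose vertices are pairwise non-adjacent. A SIL is a triple $(x,y\mid z)$ of pairwise non-adjacent vertices such that the component of $\Gamma\setminus(\mathrm{lk}(x)\cap\mathrm{lk}(y))$ containing $z$ contains neither $x$ nor $y$. *)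

(* Defs.v *)
From mathcomp Require Import all_boot.
Set Implicit Arguments. Unset Strict Implicit. Unset Printing Implicit Defensive.

(* A finite simplicial graph: vertex type V : finType, adjacency e : rel V,
   assumed symmetric and irreflexive (hypotheses of the theorem). *)

Section Graph.
Variables (V : finType) (e : rel V).

Definition lk (u : V) : {set V} := [set w | e u w].
Definition st (u : V) : {set V} := u |: lk u.
Definition vle (u v : V) : bool := lk u \subset st v.
Definition vequiv (u v : V) : bool := vle u v && vle v u.
Definition eqclass (u : V) : {set V} := [set w | vequiv u w].
Definition is_eqclass (C : {set V}) : bool := [exists u, C == eqclass u].

Definition nafree_class (C : {set V}) : bool :=
  [&& is_eqclass C, 1 < #|C| & [forall u in C, forall w in C, ~~ e u w]].

Definition num_nafree : nat := #|[set C : {set V} | nafree_class C]|.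

(* SIL (x,y | z): x,y,z pairwise non-adjacent (x <> y), and the component of
   Gamma \ (lk x :&: lk y) containing z contains neither x nor y. *)
Definition sil (x y z : V) : bool :=
  let L := lk x :&: lk y in
  let r := [rel a b | [&& e a b, a \notin L & b \notin L]] in
  [&& x != y, ~~ e x y, ~~ e x z, ~~ e y z,
      ~~ connect r z x & ~~ connect r z y].

Definition has_SIL : Prop := exists x y z, sil x y z.

End Graph.

(* Groups given as setoids (carrier, equality, operations). *)
Record sgrp := SGrp {
  carr : Type;
  geq : carr -> carr -> Prop;
  gmul : carr -> carr -> carr;
  gone : carr;
  ginv : carr -> carr }.

(* Right-angled Artin group: words over generators^{+-1} modulo the
   congruence generated by free cancellation and commutation of adjacent
   generators. *)
Definition letter (V : Type) := (V * bool)%type.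

Inductive raag_eq (V : Type) (e : V -> V -> bool) : seq (letter V) -> seq (letter V) -> Prop :=
| raag_refl w : raag_eq e w w
| raag_sym u w : raag_eq e u w -> raag_eq e w u
| raag_trans u v w : raag_eq e u v -> raag_eq e v w -> raag_eq e u w
| raag_cancel u w a b :
    raag_eq e (u ++ (a, b) :: (a, ~~ b) :: w) (u ++ w)
| raag_comm u w a b c d : e a c ->
    raag_eq e (u ++ (a, b) :: (c, d) :: w) (u ++ (c, d) :: (a, b) :: w).

Definition RAAG (V : Type) (e : V -> V -> bool) : sgrp :=
  @SGrp (seq (letter V)) (raag_eq e) (@cat _) [::]
        (fun w => rev (map (fun l => (l.1, ~~ l.2)) w)).

Definition F2 : sgrp := @RAAG bool (fun _ _ => false).

Definition trivial_grp : sgrp :=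
  @SGrp unit (fun _ _ => True) (fun _ _ => tt) tt (fun _ => tt).

Definition prod_grp (G H : sgrp) : sgrp :=
  @SGrp (carr G * carr H)%type
    (fun x y => geq x.1 y.1 /\ geq x.2 y.2)
    (fun x y => (gmul x.1 y.1, gmul x.2 y.2))
    (gone G, gone H)
    (fun x => (ginv x.1, ginv x.2)).

Fixpoint pow_grp (G : sgrp) (n : nat) : sgrp :=
  match n with
  | 0 => trivial_grp
  | n'.+1 => prod_grp G (pow_grp G n')
  end.

Definition grp_iso (G H : sgrp) : Prop :=
  exists (f : carr G -> carr H) (g : carr H -> carr G),
    [/\ (forall x y, geq x y -> geq (f x) (f y)),
        (forall x y, geq x y -> geq (g x) (g y)),
        (forall x y, geq (f (gmul x y)) (gmul (f x) (f y))),
        (forall x, geq (g (f x)) x) &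
        (forall y, geq (f (g y)) y)].

Definition simplicial (V : finType) (e : rel V) : Prop :=
  symmetric e /\ irreflexive e.

(* Main.v *)
Require Import Defs.
From mathcomp Require Import all_boot.
Set Implicit Arguments. Unset Strict Implicit. Unset Printing Implicit Defensive.

Section Raag.
Variables (V : Type) (e : V -> V -> bool).
Local Notation RE := (raag_eq e).

Lemma re_ctx u w s t : RE u w -> RE (s ++ u ++ t) (s ++ w ++ t).
Proof.
elim=> {u w} [w|u w _ IH|u v w _ IH1 _ IH2|u w a b|u w a b c d Hac].
- exact: raag_refl.
- exact: raag_sym.
- exact: raag_trans IH1 IH2.
- have H := raag_cancel e (s ++ u) (w ++ t) a b.
  rewrite -!catA /= in H; rewrite -!catA /=; exact H.
- have H := raag_comm (s ++ u) (w ++ t) b d Hac.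
  rewrite -!catA /= in H; rewrite -!catA /=; exact H.
Qed.

Lemma re_cat u u' w w' : RE u u' -> RE w w' -> RE (u ++ w) (u' ++ w').
Proof.
move=> H1 H2; apply: (@raag_trans _ _ _ (u' ++ w)).
  by have := re_ctx [::] w H1; rewrite /= .
by have := re_ctx u' [::] H2; rewrite !cats0.
Qed.

Lemma re_cons l u w : RE u w -> RE (l :: u) (l :: w).
Proof. by move=> H; have := re_ctx [:: l] [::] H; rewrite !cats0. Qed.

Lemma re_move (l : letter V) u v : all (fun m : letter V => e l.1 m.1) u ->
  RE (l :: u ++ v) (u ++ l :: v).
Proof.
elim: u => [|m u IH] /= H; first exact: raag_refl.
case/andP: H => Hm H.
apply: (@raag_trans _ _ _ (m :: l :: u ++ v)).
  case: l Hm {H IH} => a b Hm; case: m Hm => c d Hm.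
  exact: (@raag_comm _ _ [::] (u ++ v) a b c d Hm).
by apply: re_cons; apply: IH.
Qed.
End Raag.
Definition mapL (A B : Type) (g : A -> B) (w : seq (letter A)) : seq (letter B) :=
  map (fun l => (g l.1, l.2)) w.
Definition pmapL (A B : Type) (h : A -> option B) (w : seq (letter A)) : seq (letter B) :=
  pmap (fun l => omap (fun x => (x, l.2)) (h l.1)) w.
Definition filterL (A : Type) (p : pred A) (w : seq (letter A)) :=
  filter (fun l : letter A => p l.1) w.

Lemma mapL_re A B (e : A -> A -> bool) (e' : B -> B -> bool) (g : A -> B) u w :
  (forall x y, e x y -> e' (g x) (g y)) -> raag_eq e u w -> raag_eq e' (mapL g u) (mapL g w).
Proof.
move=> Hg; elim=> {u w} [w|u w _ IH|u v w _ IH1 _ IH2|u w a b|u w a b c d Hac].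
- exact: raag_refl.
- exact: raag_sym.
- exact: raag_trans IH1 IH2.
- rewrite /mapL !map_cat /=; exact: raag_cancel.
- rewrite /mapL !map_cat /=; apply: raag_comm; exact: Hg.
Qed.

Lemma pmapL_re A B (e : A -> A -> bool) (e' : B -> B -> bool) (h : A -> option B) u w :
  (forall x y x' y', h x = Some x' -> h y = Some y' -> e x y -> e' x' y') ->
  raag_eq e u w -> raag_eq e' (pmapL h u) (pmapL h w).
Proof.
move=> Hh; elim=> {u w} [w|u w _ IH|u v w _ IH1 _ IH2|u w a b|u w a b c d Hac].
- exact: raag_refl.
- exact: raag_sym.
- exact: raag_trans IH1 IH2.
- rewrite /pmapL !pmap_cat /=; case: (h a) => [x|] /=; [exact: raag_cancel | exact: raag_refl].
- rewrite /pmapL !pmap_cat /=; case Ea: (h a) => [x|]; case Ec: (h c) => [y|] /=;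
    try exact: raag_refl.
  apply: raag_comm; exact: Hh Ea Ec Hac.
Qed.

Lemma filterL_re A (e : A -> A -> bool) (p : pred A) u w :
  raag_eq e u w -> raag_eq e (filterL p u) (filterL p w).
Proof.
elim=> {u w} [w|u w _ IH|u v w _ IH1 _ IH2|u w a b|u w a b c d Hac].
- exact: raag_refl.
- exact: raag_sym.
- exact: raag_trans IH1 IH2.
- rewrite /filterL !filter_cat /=; case: (p a) => /=; [exact: raag_cancel | exact: raag_refl].
- rewrite /filterL !filter_cat /=; case: (p a); case: (p c) => /=;
    try exact: raag_refl.
  exact: raag_comm.
Qed.

Lemma pmapL_cat A B (h : A -> option B) u w : pmapL h (u ++ w) = pmapL h u ++ pmapL h w.
Proof. exact: pmap_cat. Qed.

Lemma pmapL_mapL A B (h : B -> option A) (g : A -> B) w :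
  (forall x, h (g x) = Some x) -> pmapL h (mapL g w) = w.
Proof. move=> H; elim: w => [|[x b] w IH] //=; by rewrite /pmapL /= H /= -/(pmapL h _) IH. Qed.

Lemma pmapL_nil A B (h : A -> option B) w :
  all (fun l : letter A => ~~ isSome (h l.1)) w -> pmapL h w = [::].
Proof. elim: w => [|[x b] w IH] //= /andP[H1 H2]; rewrite /pmapL /=; case: (h x) H1 => //= _; by rewrite /= -/(pmapL h _) IH. Qed.

Lemma mapL_pmapL A B (h : A -> option B) (g : B -> A) w :
  (forall v x, h v = Some x -> g x = v) ->
  mapL g (pmapL h w) = filterL (fun v => isSome (h v)) w.
Proof.
move=> H; elim: w => [|[x b] w IH] //=.
rewrite /pmapL /filterL /=; case E: (h x) => [y|] /=.
  by rewrite (H _ _ E); congr cons; exact: IH.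
exact: IH.
Qed.

Lemma re_split (A : eqType) (e : A -> A -> bool) (p : pred A) x :
  (forall v w, ~~ p v -> p w -> e v w) ->
  raag_eq e x (filterL p x ++ filterL (predC p) x).
Proof.
move=> H; elim: x => [|[v b] x IH] /=; first exact: raag_refl.
rewrite /filterL /=; case Hv: (p v) => /=.
  exact: re_cons.
apply: raag_trans (re_cons _ IH) _.
apply: re_move; apply/allP => -[w c]; rewrite mem_filter /= => /andP[Hw _].
by apply: H; rewrite ?Hv.
Qed.
Definition pset (V : finType) (p : V * V) : {set V} := [set p.1; p.2].
Definition good (V : finType) (e : rel V) (p : V * V) : bool :=
  [&& p.1 != p.2, ~~ e p.1 p.2 & [forall c, (c \notin pset p) ==> e p.1 c && e p.2 c]].
Definition hp (V : finType) (p : V * V) (v : V) : option bool :=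
  if v == p.1 then Some false else if v == p.2 then Some true else None.
Definition gp (V : finType) (p : V * V) (t : bool) : V := if t then p.2 else p.1.
Definition Rest (V : finType) (l : seq (V * V)) (v : V) : bool :=
  all (fun p => v \notin pset p) l.

Fixpoint Fp (V : finType) (l : seq (V * V)) :
    seq (letter V) -> carr (pow_grp F2 (size l)) :=
  match l return seq (letter V) -> carr (pow_grp F2 (size l)) with
  | [::] => fun _ => tt
  | p :: l' => fun w => (pmapL (hp p) w, Fp l' w)
  end.


Fixpoint Gp (V : finType) (l : seq (V * V)) :
    carr (pow_grp F2 (size l)) -> seq (letter V) :=
  match l return carr (pow_grp F2 (size l)) -> seq (letter V) with
  | [::] => fun _ => [::]
  | p :: l' => fun y => mapL (gp p) y.1 ++ @Gp V l' y.2
  end.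
Arguments Gp {V} l _.

Lemma hpE (V : finType) (p : V * V) v : isSome (hp p v) = (v \in pset p).
Proof. rewrite /hp !inE; by case: (v == p.1); case: (v == p.2). Qed.

Lemma hp_gp (V : finType) (p : V * V) t : p.1 != p.2 -> hp p (gp p t) = Some t.
Proof.
move=> H; rewrite /hp /gp; case: t; last by rewrite eqxx.
by rewrite eq_sym (negbTE H) eqxx.
Qed.

Lemma gp_hp (V : finType) (p : V * V) v t : hp p v = Some t -> gp p t = v.
Proof.
rewrite /hp /gp; case: eqP => [->|_]; first by case=> <-.
by case: eqP => [->|_] // [<-].
Qed.

Lemma pow_refl n (y : carr (pow_grp F2 n)) : Defs.geq y y.
Proof. move: y; elim: n => [|n IH] [] //= a b; split; [exact: raag_refl | exact: IH]. Qed.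

Lemma hp_noedge (V : finType) (e : rel V) p x y x' y' :
  simplicial e -> good e p -> hp p x = Some x' -> hp p y = Some y' -> e x y = false.
Proof.
case=> Hs Hi /and3P[_ H2 _] Hx Hy.
have: x \in pset p by rewrite -hpE Hx.
have: y \in pset p by rewrite -hpE Hy.
rewrite !inE => /orP[]/eqP-> /orP[]/eqP->; rewrite ?Hi //; first by rewrite Hs (negbTE H2).
exact: negbTE.
Qed.

Lemma Fp_resp (V : finType) (e : rel V) l u w :
  simplicial e -> all (good e) l -> raag_eq e u w -> Defs.geq (Fp l u) (Fp l w).
Proof.
move=> Hs; elim: l => [|p l IH] //= /andP[Hp Hl] Huw; split; last exact: IH.
apply: (pmapL_re (e' := fun _ _ => false)) Huw => x y x' y' Hx Hy.
by rewrite (hp_noedge Hs Hp Hx Hy).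
Qed.

Lemma Gp_resp (V : finType) (e : rel V) l y y' :
  Defs.geq y y' -> raag_eq e (Gp l y) (Gp l y').
Proof.
elim: l y y' => [|p l IH] /= y y'; first by move=> _; exact: raag_refl.
case=> H1 H2; apply: re_cat; last exact: IH.
by apply: (mapL_re (e := fun _ _ => false)) H1.
Qed.

Lemma Fp_mul (V : finType) l (u w : seq (letter V)) :
  Defs.geq (Fp l (u ++ w)) (gmul (Fp l u) (Fp l w)).
Proof.
elim: l => [|p l IH] //=; split; last exact: IH.
rewrite pmapL_cat; exact: raag_refl.
Qed.
Definition disj (V : finType) (l : seq (V * V)) :=
  pairwise (fun p q : V * V => [disjoint pset p & pset q]) l.

Lemma gp_in (V : finType) (p : V * V) t : gp p t \in pset p.
Proof. by case: t; rewrite !inE eqxx ?orbT. Qed.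

Lemma notin_other (V : finType) (p : V * V) l v :
  all (fun q => [disjoint pset p & pset q]) l -> v \in pset p -> Rest l v.
Proof. move=> H Hv; apply/allP => q Hq; by rewrite (disjointFr (allP H q Hq) Hv). Qed.

Lemma Gp_in (V : finType) (l : seq (V * V)) y :
  all (fun m : letter V => ~~ Rest l m.1) (Gp l y).
Proof.
elim: l y => [|p l IH] //= y; rewrite all_cat; apply/andP; split.
  rewrite /mapL all_map; apply/allP => m _ /=; by rewrite gp_in.
apply: sub_all (IH y.2) => m /=; by rewrite negb_and => ->; rewrite orbT.
Qed.

Lemma Fp_Gp (V : finType) (e : rel V) l y s t :
  all (good e) l -> disj l ->
  all (fun m : letter V => Rest l m.1) s -> all (fun m : letter V => Rest l m.1) t ->
  Defs.geq (Fp l (s ++ Gp l y ++ t)) y.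
Proof.
elim: l y s t => [|p l IH] //= y s t /andP[Hp Hg] /andP[Hd1 Hd2] Hs Ht; split.
  case/and3P: Hp => Hp _ _.
  rewrite !pmapL_cat pmapL_mapL; last by move=> x; exact: hp_gp.
  rewrite (pmapL_nil (w := s)); last by apply: sub_all Hs => m /andP[]; rewrite -hpE.
  rewrite (pmapL_nil (w := t)); last by apply: sub_all Ht => m /andP[]; rewrite -hpE.
  rewrite (pmapL_nil (w := Gp l y.2)) ?cats0; first exact: raag_refl.
  apply: sub_all (Gp_in y.2) => m; rewrite hpE; apply: contra => Hm.
  exact: notin_other Hd1 Hm.
rewrite -catA [s ++ _]catA; apply: IH => //.
- rewrite all_cat; apply/andP; split; first by apply: sub_all Hs => m /andP[].
  rewrite /mapL all_map; apply/allP => m _ /=; exact: notin_other Hd1 (gp_in _ _).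
- by apply: sub_all Ht => m /andP[].
Qed.

Lemma pmapL_filter (A B : Type) (h : A -> option B) (P : pred A) w :
  (forall v, isSome (h v) -> P v) -> pmapL h (filterL P w) = pmapL h w.
Proof.
move=> H; elim: w => [|[x b] w IH] //=; rewrite /filterL /pmapL /=.
case Px: (P x) => /=; first by rewrite -/(pmapL h _) -/(filterL _ _) IH.
case E: (h x) => [y|] /=; last by rewrite -/(pmapL h _) -/(filterL _ _) IH.
by move: (H x); rewrite E Px => /(_ isT).
Qed.

Lemma filterL_filterL (A : Type) (a b : pred A) w :
  filterL a (filterL b w) = filterL (fun v => b v && a v) w.
Proof. by rewrite /filterL -filter_predI; apply: eq_filter => -[x c] /=; rewrite andbC. Qed.

Lemma Fp_filter (V : finType) l (P : pred V) w :
  (forall q v, q \in l -> v \in pset q -> P v) -> Fp l (filterL P w) = Fp l w.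
Proof.
elim: l => [|q l IH] //= H; rewrite IH; last by move=> q' v Hq'; apply: H; rewrite inE Hq' orbT.
rewrite pmapL_filter // => v; rewrite hpE; apply: H; exact: mem_head.
Qed.

Lemma decomp (V : finType) (e : rel V) l x :
  simplicial e -> all (good e) l -> disj l ->
  raag_eq e x (Gp l (Fp l x) ++ filterL (Rest l) x).
Proof.
move=> [Hs Hi]; elim: l x => [|p l IH] x /=.
  move=> _ _; rewrite /filterL filter_predT; exact: raag_refl.
move=> /andP[Hp Hg] /andP[Hd1 Hd2].
apply: raag_trans (re_split (p := mem (pset p)) x _) _.
  move=> v w /= Hv Hw; case/and3P: Hp => _ _ /forallP/(_ v); rewrite Hv /=.
  move: Hw; rewrite !inE => /orP[]/eqP-> /andP[H1 H2]; by rewrite Hs.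
rewrite -catA; apply: re_cat.
  rewrite mapL_pmapL; last by move=> v t; exact: gp_hp.
  rewrite /filterL (eq_filter (a2 := fun m : letter V => m.1 \in pset p)); first exact: raag_refl.
  by move=> m; rewrite /= hpE.
apply: raag_trans (IH _ Hg Hd2) _.
rewrite Fp_filter; last first.
  by move=> q v Hq Hv /=; rewrite (disjointFl (allP Hd1 q Hq) Hv).
rewrite filterL_filterL; exact: raag_refl.
Qed.
Lemma isSome_insub (V : finType) (P : pred V) v :
  isSome (insub v : option {x | P x}) = P v.
Proof. by case: insubP => [u -> _|/negbTE ->]. Qed.

Lemma iso_main (V : finType) (e : rel V) l :
  simplicial e -> all (good e) l -> disj l ->
  grp_iso (RAAG e) (prod_grp (pow_grp F2 (size l))
     (RAAG (fun x y : {v | Rest l v} => e (val x) (val y)))).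
Proof.
move=> Hs Hg Hd.
pose h := fun v : V => (insub v : option {v | Rest l v}).
exists (fun x => (Fp l x, pmapL h x)).
exists (fun y => Gp l y.1 ++ mapL val y.2).
split.
- move=> x y /= Hxy; split.
 exact: (Fp_resp Hs Hg Hxy).
  apply: pmapL_re Hxy => a b a' b'; rewrite /h.
  case: insubP => // u _ <- [<-]; case: insubP => // u' _ <- [<-] //.
- move=> [x1 x2] [y1 y2] [/= H1 H2]; apply: re_cat; first exact: Gp_resp.
  by apply: mapL_re H2.
- move=> x y /=; hnf; split; first exact: Fp_mul.
  rewrite pmapL_cat; exact: raag_refl.
- move=> x /=; rewrite mapL_pmapL; last first.
    by move=> v u; rewrite /h; case: insubP => // u' _ <- [<-].
  rewrite /filterL (eq_filter (a2 := fun m : letter V => Rest l m.1)); last first.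
    by move=> m; rewrite /= /h isSome_insub.
  apply: raag_sym; exact: decomp.
- move=> [y1 y2] /=; hnf; split.
    have := Fp_Gp y1 (s := [::]) (t := mapL val y2) Hg Hd isT; rewrite /=; apply.
    rewrite /mapL all_map; apply/allP => m _ /=; exact: valP.
  rewrite pmapL_cat pmapL_mapL; last by move=> u; rewrite /h valK.
  rewrite pmapL_nil; first exact: raag_refl.
  apply: sub_all (Gp_in y1) => m; by rewrite /h isSome_insub.
Qed.
Lemma vequiv_refl (V : finType) (e : rel V) u : vequiv e u u.
Proof. by rewrite /vequiv /vle /st subsetUr. Qed.

Lemma KL1 (V : finType) (e : rel V) a b x :
  simplicial e -> vequiv e a b -> ~~ e a b -> e a x = e b x.
Proof.
case=> Hs _ /andP[H1 H2] Hab.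
have F : forall a b, vle e a b -> ~~ e a b -> e a x -> e b x.
  move=> a' b' H Hn Hx; move/subsetP: H => /(_ x); rewrite /lk /st !inE Hx => /(_ isT).
  by case/orP => // /eqP Ex; rewrite -Ex Hx in Hn.
apply/idP/idP; first exact: F.
by apply: F => //; rewrite Hs.
Qed.

Lemma conn_in (T : finType) (r : rel T) c t :
  (forall x, ~~ r x t) -> connect r c t -> c = t.
Proof.
move=> H /connectP[p Hp Et]; move: Hp Et; case/lastP: p => [|q y] /=.
  by move=> _ Et; rewrite Et.
rewrite rcons_path last_rcons => /andP[_ Hr] Et.
by move: (H (last c q)); rewrite Et Hr.
Qed.

Lemma KL2 (V : finType) (e : rel V) a b :
  simplicial e -> ~ has_SIL e ->
  a != b -> ~~ e a b -> vequiv e a b -> good e (a, b).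
Proof.
move=> Hsi HnS Hab Nab Hv; rewrite /good /= Hab Nab /=.
have [Hs Hi] := Hsi.
apply/forallP => c; apply/implyP; rewrite !inE negb_or => /andP[Hca Hcb].
rewrite -(KL1 c Hsi Hv Nab) andbb.
apply/negPn/negP => Nac; apply: HnS; exists a, b, c.
have Nbc : ~~ e b c by rewrite -(KL1 c Hsi Hv Nab).
rewrite /sil Hab Nab Nac Nbc /=.
have Hno : forall t, (t == a) || (t == b) ->
   forall x, ~~ [&& e x t, x \notin lk e a :&: lk e b & t \notin lk e a :&: lk e b].
  move=> t Ht x; apply/negP => /and3P[Hxt Hx _]; move: Hx; rewrite !inE.
  case/orP: Ht => /eqP Et; subst t.
    have Eax : e a x by rewrite Hs.
    have Ebx : e b x by rewrite -(KL1 x Hsi Hv Nab).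
    by rewrite Eax Ebx.
  have Ebx : e b x by rewrite Hs.
  have Eax : e a x by rewrite (KL1 x Hsi Hv Nab).
  by rewrite Eax Ebx.
apply/andP; split; apply/negP => /conn_in H.
  by move: Hca; rewrite H ?eqxx //; apply: Hno; rewrite eqxx.
by move: Hcb; rewrite H ?eqxx //; apply: Hno; rewrite eqxx orbT.
Qed.
Lemma KL3 (V : finType) (e : rel V) a b :
  simplicial e -> good e (a, b) -> vequiv e a b -> eqclass e a = pset (a, b).
Proof.
move=> [Hs Hi] /and3P[/= Hab Nab /forallP Hc] Hv.
apply/setP => x; rewrite /eqclass /pset !inE /=.
case: (eqVneq x a) => [->|Hxa]; first by rewrite vequiv_refl.
case: (eqVneq x b) => [->|Hxb] //=.
move: (Hc x); rewrite !inE (negbTE Hxa) (negbTE Hxb) /= => /andP[Eax Ebx].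
apply/negP => /andP[_ /subsetP /(_ b)].
rewrite /lk /st !inE Hs Ebx => /(_ isT) /orP[/eqP Eba|]; last by rewrite (negbTE Nab).
by rewrite Eba eqxx in Hab.
Qed.

Lemma nafree_pair (V : finType) (e : rel V) a b :
  simplicial e -> good e (a, b) -> vequiv e a b -> nafree_class e (pset (a, b)).
Proof.
move=> Hsi Hg Hv; have [Hs Hi] := Hsi.
have /and3P[/= Hab Nab _] := Hg.
rewrite /nafree_class; apply/and3P; split.
- apply/existsP; exists a; by rewrite (KL3 Hsi Hg Hv).
- by rewrite /pset cards2 Hab.
- apply/forallP => u; apply/implyP; rewrite !inE => Hu.
  apply/forallP => w; apply/implyP; rewrite !inE => Hw.
  case/orP: Hu => /eqP ->; case/orP: Hw => /eqP -> //=; rewrite ?Hi //.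
  by rewrite Hs.
Qed.

Lemma nafree_inv (V : finType) (e : rel V) C :
  simplicial e -> ~ has_SIL e ->
  nafree_class e C -> exists p, C = pset p /\ good e p /\ vequiv e p.1 p.2.
Proof.
move=> Hsi HnS /and3P[/existsP[u /eqP HC] Hcard Hall].
have Hu : u \in C by rewrite HC inE vequiv_refl.
have [v Hv Hvu] : exists2 v, v \in C & v != u.
  case/card_gt1P: Hcard => x [y [Hx Hy Hxy]].
  case: (eqVneq x u) => [Exu|Nxu]; last by exists x.
  by exists y => //; rewrite -Exu eq_sym.
have Nuv : ~~ e u v.
  by move/forallP: Hall => /(_ u) /implyP /(_ Hu) /forallP /(_ v) /implyP /(_ Hv).
have Vuv : vequiv e u v by move: Hv; rewrite HC inE.
have Huv : u != v by rewrite eq_sym.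
have Guv := KL2 Hsi HnS Huv Nuv Vuv.
exists (u, v); split; last by split.
by rewrite HC (KL3 Hsi Guv Vuv).
Qed.
Lemma extract (V : finType) (e : rel V) (cs : seq {set V}) :
  (forall C, C \in cs -> exists p, C = pset p /\ good e p) ->
  exists l, map (@pset V) l = cs /\ all (good e) l.
Proof.
elim: cs => [|C cs IH] H; first by exists [::].
have [p [-> Hp]] := H C (mem_head _ _).
have [l [Hl Hg]] : exists l, map (@pset V) l = cs /\ all (good e) l.
  by apply: IH => C' HC'; apply: H; rewrite inE HC' orbT.
by exists (p :: l); rewrite /= Hl Hp Hg.
Qed.

Lemma good_closed (V : finType) (e : rel V) p v c :
  good e p -> v \in pset p -> ~~ e v c -> c \in pset p.
Proof.
case/and3P=> _ _ /forallP /(_ c) Hc Hv; apply: contraR => Hn.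
move/implyP: Hc => /(_ Hn) /andP[H1 H2].
by move: Hv; rewrite !inE => /orP[]/eqP->.
Qed.

Lemma overlap (V : finType) (e : rel V) p q v :
  simplicial e -> good e p -> good e q -> v \in pset p -> v \in pset q ->
  pset q = pset p.
Proof.
move=> [Hs Hi] Hp Hq Hvp Hvq.
have /and3P[Hp12 _ _] := Hp.
have /and3P[Hq12 Nq _] := Hq.
have Sub : pset q \subset pset p.
  apply/subsetP => x Hx.
  have : (x == q.1) || (x == q.2) by move: Hx; rewrite !inE.
  case/orP=> /eqP->.
    have : (v == q.1) || (v == q.2) by move: Hvq; rewrite !inE.
    case/orP=> /eqP Ev; first by rewrite -Ev.
    by apply: (good_closed Hp Hvp); rewrite Ev Hs.
  have : (v == q.1) || (v == q.2) by move: Hvq; rewrite !inE.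
  case/orP=> /eqP Ev; last by rewrite -Ev.
  by apply: (good_closed Hp Hvp); rewrite Ev.
apply/eqP; rewrite eqEcard Sub /pset !cards2 Hp12 Hq12 //.
Qed.

Lemma disj_of_uniq (V : finType) (e : rel V) l :
  simplicial e -> all (good e) l -> uniq (map (@pset V) l) -> disj l.
Proof.
move=> Hsi; elim: l => [|p l IH] //= /andP[Hp Hl] /andP[Hnot Hu].
rewrite /disj /=; apply/andP; split; last exact: IH.
apply/allP => q Hq; rewrite /disjoint; apply/pred0P => v /=.
apply/negP => /andP[H1 H2].
have E := overlap Hsi Hp (allP Hl q Hq) H1 H2.
by move: Hnot; rewrite -E map_f.
Qed.
Lemma vle_transfer (V : finType) (e : rel V) l (x y : {v | Rest l v}) :
  simplicial e -> all (good e) l ->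
  vle (fun a b : {v | Rest l v} => e (val a) (val b)) x y -> vle e (val x) (val y).
Proof.
move=> [Hs Hi] Hg /subsetP H; apply/subsetP => w; rewrite /lk /st !inE => Hw.
case Rw: (Rest l w).
  have : (exist _ w Rw : {v | Rest l v}) \in lk (fun a b : {v | Rest l v} => e (val a) (val b)) x.
    by rewrite inE.
  move/H; rewrite /st !inE => /orP[/eqP <-|->]; first by rewrite eqxx.
  by rewrite orbT.
move/negbT: Rw; rewrite /Rest => /allPn[p Hp /negbNE Hwp].
have Hy := allP (valP y) p Hp.
have /and3P[_ _ /forallP /(_ (val y))] := allP Hg p Hp.
rewrite Hy /= => /andP[H1 H2].
move: Hwp; rewrite !inE => /orP[]/eqP->; by rewrite Hs ?H1 ?H2 orbT.
Qed.

Theorem lemma4p2 (V : finType) (e : rel V) :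
  simplicial e -> ~ has_SIL e ->
  exists (W : finType) (f : rel W),
    [/\ simplicial f,
        (forall C : {set W}, ~~ nafree_class f C) &
        grp_iso (RAAG e) (prod_grp (pow_grp F2 (num_nafree e)) (RAAG f))].
Proof.
move=> Hsi HnS; have [Hs Hi] := Hsi.
pose cs := enum [set C | nafree_class e C].
have [l [Hl Hg]] : exists l, map (@pset V) l = cs /\ all (good e) l.
  apply: extract => C; rewrite mem_enum inE => /(nafree_inv Hsi HnS) [p [-> [Hp _]]].
  by exists p.
have Hd : disj l by apply: (disj_of_uniq Hsi Hg); rewrite Hl enum_uniq.
have Hk : num_nafree e = size l by rewrite /num_nafree cardE -/cs -Hl size_map.
exists ({v : V | Rest l v} : finType).
exists (fun a b : {v : V | Rest l v} => e (val a) (val b)).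
split.
- by split; [move=> a b; exact: Hs | move=> a; exact: Hi].
- move=> C; apply/negP => /and3P[/existsP[u /eqP HC] Hcard Hall].
  have Hu : u \in C by rewrite HC inE vequiv_refl.
  have [v Hv Hvu] : exists2 v, v \in C & v != u.
    case/card_gt1P: Hcard => x [y [Hx Hy Hxy]].
    case: (eqVneq x u) => [Exu|Nxu]; last by exists x.
    by exists y => //; rewrite -Exu eq_sym.
  have Nuv : ~~ e (val u) (val v).
    by move/forallP: Hall => /(_ u) /implyP /(_ Hu) /forallP /(_ v) /implyP /(_ Hv).
  have /andP[V1 V2] : vequiv (fun a b : {v : V | Rest l v} => e (val a) (val b)) u v.
    by move: Hv; rewrite HC inE.
  have Vuv : vequiv e (val u) (val v).
    by rewrite /vequiv (vle_transfer Hsi Hg V1) (vle_transfer Hsi Hg V2).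
  have Huv : val u != val v by rewrite val_eqE eq_sym.
  have Guv := KL2 Hsi HnS Huv Nuv Vuv.
  have Hn := nafree_pair Hsi Guv Vuv.
  have : pset (val u, val v) \in cs by rewrite mem_enum inE.
  rewrite -Hl => /mapP[p Hp Ep].
  have : val u \in pset p by rewrite -Ep !inE eqxx.
  by rewrite (negbTE (allP (valP u) p Hp)).
- rewrite Hk; exact: iso_main.
Qed.
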